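(* Let $G$ be a finitely generated group acting on a set $X$. Then the following are equivalent: (1) the action $G\curvearrowright X$ is amenable; (2) for every configuration pair $(\mathfrak{g},\mathcal{E})$ for this action, the system of configuration equations $\mathrm{Eq}(\mathfrak{g},\mathcal{E};X)$ has a normalized solution.
   Context: An action $G\curvearrowright X$ is amenable if there is a finitely additive measure $\mu$ on all subsets of $X$ with values in $[0,\infty]$, with $\mu(gE)=\mu(E)$ for all $E\subseteq X$, $g\in G$, and $\mu(X)=1$. A configuration pair $(\mathfrak{g},\mathcal{E})$ consists of an ordered tuple $\mathfrak{g}=(g_1,\dots,g_n)$ of elements of $G$ and a finite partition $\mathcal{E}=\{E_1,\dots,E_m\}$ of $X$. A configuration related to $(\mathfrak{g},\mathcal{E})$ is a tuple $C=(C_0,C_1,\dots,C_n)\in\{1,\dots,m\}^{n+1}$ for which there exists $x\in E_{C_0}$ with $g_i\cdot x\in E_{C_i}$ for all $i=1,\dots,n$; the set of these is $\mathrm{Con}(\mathfrak{g},\mathcal{E};X)$. The configuration equations $\mathrm{Eq}(\mathfrak{g},\mathcal{E};X)$ are the linear equations in unknowns $(f_C)_{C\in \mathrm{Con}(\mathfrak{g},\mathcal{E};X)}$: for every $j\in\{1,\dots,n\}$ and $i\in\{1,\dots,m\}$, $\sum\{f_C: C_j=i\}=\sum\{f_C: C_0=i\}$. A normalized solution is a solution with all $f_C\ge 0$ and $\sum_C f_C=1$. *)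

(* Defs.v *)
From HB Require Import structures.
From mathcomp Require Import all_boot all_order all_algebra.
From mathcomp Require Import boolp classical_sets constructive_ereal reals Rstruct.
From Stdlib Require Import Rdefinitions.

Set Implicit Arguments.
Unset Strict Implicit.
Unset Printing Implicit Defensive.

Import Order.TTheory GRing.Theory Num.Theory.

Inductive generated (G : groupType) (S : seq G) : G -> Prop :=
  | gen_in g : g \in S -> generated S g
  | gen_one : generated S 1%g
  | gen_mul g h : generated S g -> generated S h -> generated S (g * h)%g
  | gen_inv g : generated S g -> generated S (g^-1)%g.

Definition finitely_generated (G : groupType) : Prop :=
  exists S : seq G, forall g : G, generated S g.

Definition is_action (G : groupType) (X : Type) (act : G -> X -> X) : Prop :=
  (forall x, act 1%g x = x) /\
  (forall g h x, act (g * h)%g x = act g (act h x)).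

Local Open Scope classical_set_scope.
Local Open Scope ereal_scope.

Definition finitely_additive_measure (X : Type) (mu : set X -> \bar R) : Prop :=
  [/\ mu set0 = 0,
      (forall E, 0 <= mu E) &
      (forall A B, A `&` B = set0 -> mu (A `|` B) = mu A + mu B)].

Definition amenable_action (G : groupType) (X : Type) (act : G -> X -> X) : Prop :=
  exists mu : set X -> \bar R,
    [/\ finitely_additive_measure mu,
        (forall (g : G) (E : set X), mu [set act g x | x in E] = mu E) &
        mu setT = 1].

Local Close Scope ereal_scope.
Local Close Scope classical_set_scope.

(* A configuration pair (g, E): g = (g_1, ..., g_n) is given by
   g : 'I_n -> G (g_(j+1) = g j), and the finite partition
   E = {E_1, ..., E_m} of X is given by the labelling part : X -> 'I_m with
   E_(i+1) = part^-1 (i); we require every piece to be nonempty. *)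
Definition is_partition (X : Type) (m : nat) (part : X -> 'I_m) : Prop :=
  forall i : 'I_m, exists x : X, part x = i.

(* A tuple C = (C_0, C_1, ..., C_n) is coded by C : {ffun 'I_n.+1 -> 'I_m},
   C_0 = C ord0 and C_j = C (lift ord0 (j-1)) for j = 1..n. *)
Definition is_configuration (G : groupType) (X : Type) (act : G -> X -> X)
    (n m : nat) (g : 'I_n -> G) (part : X -> 'I_m)
    (C : {ffun 'I_n.+1 -> 'I_m}) : Prop :=
  exists x : X, part x = C ord0 /\
    forall j : 'I_n, part (act (g j) x) = C (lift ord0 j).

Definition Con (G : groupType) (X : Type) (act : G -> X -> X)
    (n m : nat) (g : 'I_n -> G) (part : X -> 'I_m) : {set {ffun 'I_n.+1 -> 'I_m}} :=
  [set C | `[< is_configuration act g part C >] ].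

Local Open Scope ring_scope.

(* f = (f_C)_{C in Con} is a normalized solution of Eq(g, E; X)
   (values of f outside Con are irrelevant). *)
Definition normalized_solution (G : groupType) (X : Type) (act : G -> X -> X)
    (n m : nat) (g : 'I_n -> G) (part : X -> 'I_m)
    (f : {ffun 'I_n.+1 -> 'I_m} -> R) : Prop :=
  [/\ (forall j : 'I_n, forall i : 'I_m,
          \sum_(C in Con act g part | C (lift ord0 j) == i) f C
          = \sum_(C in Con act g part | C ord0 == i) f C),
      (forall C, C \in Con act g part -> 0 <= f C) &
      \sum_(C in Con act g part) f C = 1].

Definition has_normalized_solution (G : groupType) (X : Type) (act : G -> X -> X)
    (n m : nat) (g : 'I_n -> G) (part : X -> 'I_m) : Prop :=
  exists f : {ffun 'I_n.+1 -> 'I_m} -> R, normalized_solution act g part f.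

(* Main.v *)
Require Import Defs.
From HB Require Import structures.
From mathcomp Require Import all_boot all_order all_algebra.
From mathcomp Require Import boolp classical_sets constructive_ereal reals Rstruct.
From mathcomp Require Import all_classical all_reals all_analysis Rstruct_topology.
From Stdlib Require Import Rdefinitions.

Set Implicit Arguments.
Unset Strict Implicit.
Unset Printing Implicit Defensive.
Import Order.TTheory GRing.Theory Num.Theory.
Local Open Scope classical_set_scope.
Local Open Scope ring_scope.
Local Notation R := Rdefinitions.R.

Lemma sum_by_value n m (Con : {set {ffun 'I_n.+1 -> 'I_m}}) (f : _ -> R)
  (j : 'I_n.+1) (h : 'I_m -> R) :
  \sum_(C in Con) f C * h (C j) = \sum_(i < m) h i * \sum_(C in Con | C j == i) f C.
Proof.
rewrite (partition_big (fun C : {ffun 'I_n.+1 -> 'I_m} => C j) predT) //=.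
apply: eq_bigr => i _; rewrite mulr_sumr; apply: eq_bigr => C /andP[_ /eqP ->].
by rewrite mulrC.
Qed.

Section Fin.
Variables (G : groupType) (X : Type) (act : G -> X -> X).
Hypothesis hact : is_action act.

Lemma image_act (g : G) (E : set X) :
  [set act g x | x in E] = [set y | E (act (g^-1)%g y)].
Proof.
case: hact => h1 hM.
apply/seteqP; split => y /=.
- by case=> x Ex <-; rewrite -hM mulVg h1.
- by move=> Ey; exists (act (g^-1)%g y) => //; rewrite -hM mulgV h1.
Qed.

Lemma finite_step (x0 : X) N (gs : 'I_N -> G) (Es : 'I_N -> set X)
  (H : forall (n m : nat) (g : 'I_n -> G) (part : X -> 'I_m),
      is_partition part -> has_normalized_solution act g part) :
  exists mu : set X -> R, [/\ (forall A, 0 <= mu A <= 1), mu setT = 1,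
     (forall A B, A `&` B = set0 -> mu (A `|` B) = mu A + mu B) &
     forall k, mu [set act (gs k) x | x in Es k] = mu (Es k)].
Proof.
pose atom (x : X) : {ffun 'I_N -> bool} := [ffun k => `[< Es k x >]].
pose S := [set t | `[< exists x, atom x = t >]].
have x0S : atom x0 \in S by rewrite inE; apply/asboolP; exists x0.
pose part (x : X) : 'I_#|S| := enum_rank_in x0S (atom x).
have atomS x : atom x \in S by rewrite inE; apply/asboolP; exists x.
have partK x : enum_val (part x) = atom x by rewrite /part enum_rankK_in.
have hpart : is_partition part.
  move=> i; have := enum_valP i; rewrite inE => /asboolP[x hx].
  by exists x; rewrite /part hx enum_valK_in.
pose g k := ((gs k)^-1)%g.
have [f [hsum hpos htot]] := H _ _ g part hpart.
pose P C x := part x = C ord0 /\ forall j, part (act (g j) x) = C (lift ord0 j).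
pose w C := match pselect (exists x, P C x) with
  left h => projT1 (cid h) | right _ => x0 end.
have wP C : C \in Con act g part -> P C (w C).
  rewrite inE => /asboolP hC; rewrite /w; case: pselect => [h|[]]; last exact: hC.
  exact: projT2 (cid h).
pose mu A := \sum_(C in Con act g part) f C * (`[< A (w C) >])%:R.
exists mu; split.
- move=> A; apply/andP; split.
    apply: sumr_ge0 => C hC; apply: mulr_ge0; [exact: hpos | exact: ler0n].
  rewrite -htot; apply: ler_sum => C hC.
  rewrite -[leRHS]mulr1; apply: ler_wpM2l; first exact: hpos.
  by rewrite lern1 leq_b1.
- rewrite -htot; apply: eq_bigr => C _.
  by rewrite (_ : `[< _ >] = true) ?mulr1 //; apply/asboolP.
- move=> A B hAB; rewrite /mu -big_split /=; apply: eq_bigr => C _.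
  rewrite -mulrDr; congr (_ * _).
  case: (asboolP (A (w C))) => a; case: (asboolP (B (w C))) => b;
  case: (asboolP ((A `|` B) (w C))) => ab //=.
  all: rewrite ?addr0 ?add0r //.
  all: try (first [by exfalso; apply: ab; left | by exfalso; apply: ab; right | by exfalso; case: ab]).
  by have : (A `&` B) (w C) by []; rewrite hAB.
- move=> k; rewrite image_act.
  have e1 C : C \in Con act g part ->
      `[< Es k (act (gs k)^-1 (w C)) >] = enum_val (C (lift ord0 k)) k.
    by move=> hC; have [_ h2] := wP C hC; rewrite -h2 partK /atom ffunE.
  have e0 C : C \in Con act g part -> `[< Es k (w C) >] = enum_val (C ord0) k.
    by move=> hC; have [h1 _] := wP C hC; rewrite -h1 partK /atom ffunE.
  rewrite /mu (eq_bigr (fun C => f C * (enum_val (C (lift ord0 k)) k)%:R)); last first.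
    by move=> C hC; rewrite /= e1.
  rewrite [RHS](eq_bigr (fun C => f C * (enum_val (C ord0) k)%:R)); last first.
    by move=> C hC; rewrite /= e0.
  rewrite (sum_by_value _ f (lift ord0 k) (fun i => (enum_val i k)%:R)).
  rewrite (sum_by_value _ f ord0 (fun i => (enum_val i k)%:R)).
  by apply: eq_bigr => i _; rewrite hsum.
Qed.
End Fin.

Import ArrowAsProduct numFieldNormedType.Exports.

Definition FT (X : Type) := set X -> R.
HB.instance Definition _ X := Topological.copy (FT X) (set X -> R).
HB.instance Definition _ X := Pointed.copy (FT X) (set X -> R).

Lemma FT_proj_cont X (A : set X) : continuous (fun f : FT X => f A).
Proof. exact: (@proj_continuous (set X) (fun _ => R) A). Qed.

Lemma closed_eqfun X (p q : FT X -> R) :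
  continuous p -> continuous q -> closed [set f | p f = q f].
Proof.
move=> cp cq.
have -> : [set f | p f = q f] = (fun f => p f - q f) @^-1` [set x : R | x = 0].
  rewrite predeqE => f /=; split => [->|/eqP]; first by rewrite subrr.
  by rewrite subr_eq0 => /eqP.
apply: (proj1 (continuous_closedP _)); last exact: closed_eq.
by move=> x; exact: (@continuousB R R^o _ p q x (cp x) (cq x)).
Qed.

Lemma compact_K X : compact [set f : FT X | forall A, `[(0:R), 1]%classic (f A)].
Proof.
have h := (@tychonoff (set X) (fun _ => R) (fun _ => `[(0:R), 1]%classic)
  (fun _ => @segment_compact R 0 1)).
exact: h.
Qed.

Lemma contD (T : topologicalType) (p q : T -> R) :
  continuous p -> continuous q -> continuous (fun x => p x + q x).
Proof. by move=> cp cq x; exact: (@continuousD R R^o T p q x (cp x) (cq x)). Qed.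

Lemma conf_to_amen (G : groupType) X (act : G -> X -> X) (hact : is_action act)
  (H : forall (n m : nat) (g : 'I_n -> G) (part : X -> 'I_m),
      is_partition part -> has_normalized_solution act g part) :
  amenable_action act.
Proof.
have [[x0 _]|nX] := pselect (exists x : X, True); last first.
  exfalso.
  pose part (x : X) : 'I_0 := False_rect _ (nX (ex_intro _ x I)).
  have hp : is_partition part by case=> i hi; exfalso; rewrite ltn0 in hi.
  have [f [_ _ htot]] := H 0 0 (fun i => 1%g) part hp.
  move: htot; rewrite big_pred0 => [/eqP|C]; first by rewrite eq_sym oner_eq0.
  by case: (C ord0).
pose K := [set f : FT X | forall A, `[(0:R), 1]%classic (f A)].
pose Cd (i : option (G * set X)) : set (FT X) := match i with
  | None => [set f : FT X | f setT = 1] `&`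
      \bigcap_(p in [set p : set X * set X | p.1 `&` p.2 = set0])
        [set f : FT X | f (p.1 `|` p.2) = f p.1 + f p.2]
  | Some p => [set f : FT X | f [set act p.1 x | x in p.2] = f p.2]
  end.
have Ccl i : closed (Cd i).
  case: i => [[g E]|] /=.
    by apply: closed_eqfun; apply: FT_proj_cont.
  apply: closedI.
    by apply: closed_eqfun; [apply: FT_proj_cont | apply: cst_continuous].
  apply: closed_bigI => p _; apply: closed_eqfun; first exact: FT_proj_cont.
  by apply: contD; apply: FT_proj_cont.
have := @compact_K X; rewrite compact_In0 => /(_ _ setT (fun i => K `&` Cd i)).
case => [|D' _|mu' hmu'].
- by exists Cd.
- pose s := pmap id (finmap.enum_fset D').
  pose gs (k : 'I_(size s)) := (nth (1%g, set0) s k).1.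
  pose Es (k : 'I_(size s)) := (nth (1%g, set0) s k).2.
  have [mu [h01 h1 hadd hinv]] := finite_step hact x0 gs Es H.
  exists mu => i /= iD'; split.
    by move=> A /=; rewrite in_itv /= h01.
  case: i iD' => [[g E]|] /= iD'.
    have gEs : (g, E) \in s by rewrite mem_pmap map_id.
    have hk : is_true (leq (index (g, E) s).+1 (size s)) by rewrite index_mem.
    have := hinv (Ordinal hk); rewrite /gs /Es /= nth_index //.
  split => //; by case=> A B /= hAB; apply: hadd.
- have hN := hmu' None I; have [hK [h1 hadd']] := hN.
  have hadd A B : A `&` B = set0 -> mu' (A `|` B) = mu' A + mu' B.
    by move=> hAB; exact: (hadd' (A, B) hAB).
  have h0 : mu' set0 = 0.
    have := hadd set0 set0 (setI0 _); rewrite setU0 => e.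
    by apply: (@addrI _ (mu' set0)); rewrite addr0 -e.
  exists (fun A => (mu' A)%:E); split.
  + split => /=.
    * by rewrite h0.
    * by move=> E; have := hK E; rewrite /= in_itv /= lee_fin => /andP[].
    * by move=> A B hAB; rewrite hadd // EFinD.
  + by move=> g E; have [_ ] := hmu' (Some (g, E)) I => /= ->.
  + by rewrite h1.
Qed.

Lemma amen_to_conf (G : groupType) X (act : G -> X -> X) (hact : is_action act)
  (ham : amenable_action act) n m (g : 'I_n -> G) (part : X -> 'I_m)
  (hp : is_partition part) : has_normalized_solution act g part.
Proof.
case: ham => mu [[h0 hge0 hadd] hinv h1].
have hle1 A : (mu A <= 1)%E.
  rewrite -h1 -(setUCr A) hadd ?setICr //; exact: leeDl.
have hrE A : mu A = (fine (mu A))%:E.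
  rewrite fineK // ge0_fin_numE //; exact: le_lt_trans (hle1 A) (ltry _).
pose r A := fine (mu A).
have r0 : r set0 = 0 by rewrite /r h0.
have rge0 A : 0 <= r A by have := hge0 A; rewrite hrE lee_fin.
have radd A B : A `&` B = set0 -> r (A `|` B) = r A + r B.
  by move=> hAB; apply: EFin_inj; rewrite EFinD -!hrE hadd.
have r1 : r setT = 1 by rewrite /r h1.
have rinv h E : r [set act h x | x in E] = r E by rewrite /r hinv.
pose cfg (x : X) : {ffun 'I_n.+1 -> 'I_m} := [ffun k =>
  if unlift ord0 k is Some j then part (act (g j) x) else part x].
have cfg0 x : cfg x ord0 = part x by rewrite ffunE unlift_none.
have cfgS x j : cfg x (lift ord0 j) = part (act (g j) x) by rewrite ffunE liftK.
have cfgCon x : cfg x \in Con act g part.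
  by rewrite inE; apply/asboolP; exists x; split => [|j]; rewrite ?cfg0 ?cfgS.
pose f C := r [set x | cfg x = C].
have sum_seq s : uniq s -> \sum_(C <- s) f C = r [set x | cfg x \in s].
  elim: s => [_|a s IH /= /andP[aNs us]].
    rewrite big_nil -r0; congr r; apply/seteqP; split => x //=.
  rewrite big_cons IH // -radd.
    congr r; apply/seteqP; split => x /=; rewrite in_cons.
      by case=> [->|->]; rewrite ?eqxx ?orbT.
    by case/predU1P; [left|right].
  apply/seteqP; split => x //= [ha hs]; move: aNs; rewrite -ha hs.
  by [].
have sumP (P : pred {ffun 'I_n.+1 -> 'I_m}) :
    \sum_(C | P C) f C = r [set x | P (cfg x)].
  rewrite -big_filter sum_seq ?filter_uniq ?index_enum_uniq //.
  by congr r; apply/seteqP; split => x /=; rewrite mem_filter mem_index_enum andbT.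
exists f; split.
- move=> j i; rewrite !sumP.
  have -> : [set x | (cfg x \in Con act g part) && (cfg x ord0 == i)] =
            [set x | part x = i].
    by apply/seteqP; split => x /=; rewrite cfgCon cfg0 => /eqP.
  have -> : [set x | (cfg x \in Con act g part) && (cfg x (lift ord0 j) == i)] =
            [set x | part (act (g j) x) = i].
    by apply/seteqP; split => x /=; rewrite cfgCon cfgS => /eqP.
  rewrite -(rinv (g j)); congr r.
  case: hact => ha1 haM.
  apply/seteqP; split => y /=.
    by case=> x hx <-.
  move=> hy; exists (act ((g j)^-1)%g y); last by rewrite -haM mulgV ha1.
  by rewrite -haM mulgV ha1.
- by move=> C _; apply: rge0.
- rewrite sumP -r1; congr r; apply/seteqP; split => x //= _.
Qed.

Local Close Scope ring_scope.
Local Close Scope classical_set_scope.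

Theorem mainTheorem1 (G : groupType) (X : Type) (act : G -> X -> X)
    (hfg : finitely_generated G) (hact : is_action act) :
  amenable_action act <->
  (forall (n m : nat) (g : 'I_n -> G) (part : X -> 'I_m),
      is_partition part -> has_normalized_solution act g part).
Proof.
split.
- by move=> ham n m g part hp; exact: amen_to_conf.
- by move=> H; exact: conf_to_amen.
Qed.
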